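(* Let $F:\mathcal{G}_{\Sigma,\Delta,\pi}\to\mathcal{G}_{\Sigma,\Delta,\pi}$ be a causal graph dynamics with a monotonic local rule $f$ of radius $r$, and assume that $\mathrm{Conj}_F(R)$ is a singleton $\{\overline{F}(R)\}$ for every renaming $R$. Let $G$ be a graph. Then the cocone $\theta^G:\widetilde{f}\circ\mathrm{Proj}_{\widetilde{i}/G}\Rightarrow F(G)$ whose component at an object $((H,C),m:H\to G)$ of $\widetilde{i}/G$ is the morphism $\theta^G_{((H,C),m)}:\widetilde{f}((H,C))\to F(G)$ with underlying renaming $\overline{F}(|m|)$, is a universal cocone, i.e. $F(G)$ together with $\theta^G$ is a colimit of $\widetilde{f}\circ\mathrm{Proj}_{\widetilde{i}/G}$.
   Context: Fix an uncountably infinite set $\mathcal{V}$, sets $\Sigma,\Delta$, finite $\pi$. Graphs: countable $V(G)\subset\mathcal{V}$, a set $E(G)$ of pairwise disjoint two-element subsets of $V(G)\times\pi$, partial labelings $\sigma(G),\delta(G)$; $\subseteq$ is componentwise inclusion. Renamings: bijections of $\mathcal{V}$ acting naturally on graphs/pointed graphs. $\mathrm{Conj}_F(R)=\{R'\mid F\circ R=R'\circ F\}$. Disk $G^r_c$: vertices at distance $\le r+1$ from $c$, edges with an endpoint at distance $\le r$, vertex labels restricted to distance $\le r$; $\mathcal{D}^r$ radius-$r$ disks, compared by inclusion with equal centers. A local rule of radius $r$: $f:\mathcal{D}^r\to$ graphs with renaming covariance, preservation of empty intersections, bounded output size, consistency of $f(G^r_u),f(G^r_v)$; CGD $F(G)=\bigcup_{v\in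 V(G)}f(G^r_v)$. Category $\mathbf{G}_{\Sigma,\Delta,\pi}$: objects graphs, morphism $m:G\to H$ a renaming $|m|$ with $|m|(G)\subseteq H$. Category $\mathbf{D}^r_{\Sigma,\Delta,\pi}$: objects $(H,\{c\})$ for $(H,c)\in\mathcal{D}^r$ and $(\varnothing,\emptyset)$; morphisms $m:(H_1,C_1)\to(H_2,C_2)$ are morphisms $H_1\to H_2$ with $|m|(C_1)\subseteq C_2$. $\widetilde{i}:\mathbf{D}^r\to\mathbf{G}$ drops the second component. $\widetilde{f}:\mathbf{D}^r\to\mathbf{G}$: $\widetilde{f}((H,\{c\}))=f((H,c))$, $\widetilde{f}((\varnothing,\emptyset))=\varnothing$, $|\widetilde{f}(m)|=\overline{F}(|m|)$. The comma category $\widetilde{i}/G$ has objects $((H,C),m:H\to G)$ and morphisms $n:((H_1,C_1),m\circ n)\to((H_2,C_2),m)$ for $n$ in $\mathbf{D}^r$; $\mathrm{Proj}_{\widetilde{i}/G}:\widetilde{i}/G\to\mathbf{D}^r$ is the first projection. *)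

(* Defs.v *)
From Stdlib Require Import List Arith FinFun.
Set Implicit Arguments.
Unset Strict Implicit.

Section CGD.
Variables (V Sig Del P : Type).
(* V = the vertex-name set \mathcal V, Sig = Sigma, Del = Delta, P = pi. *)

Definition port := (V * P)%type.

(* A (pre)graph: vertex set, set of edges (each edge is a subset of V x pi),
   partial vertex labelling and partial edge labelling given as relations. *)
Record graph := Graph {
  gV : V -> Prop;
  gE : (port -> Prop) -> Prop;
  gsig : V -> Sig -> Prop;
  gdel : (port -> Prop) -> Del -> Prop }.

Definition countable_set (S : V -> Prop) : Prop :=
  exists g : V -> nat, forall x y, S x -> S y -> g x = g y -> x = y.

Definition two_element_subset (G : graph) (e : port -> Prop) : Prop :=
  exists a b : port, a <> b /\ gV G (fst a) /\ gV G (fst b) /\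
    (forall x, e x <-> x = a \/ x = b).

Definition is_graph (G : graph) : Prop :=
  countable_set (gV G) /\
  (forall e, gE G e -> two_element_subset G e) /\
  (forall e e', gE G e -> gE G e' -> e <> e' -> forall x, ~ (e x /\ e' x)) /\
  (forall v a, gsig G v a -> gV G v) /\
  (forall v a b, gsig G v a -> gsig G v b -> a = b) /\
  (forall e a, gdel G e a -> gE G e) /\
  (forall e a b, gdel G e a -> gdel G e b -> a = b).

Definition empty_graph : graph :=
  Graph (fun _ => False) (fun _ => False) (fun _ _ => False) (fun _ _ => False).

Definition gincl (G H : graph) : Prop :=
  (forall v, gV G v -> gV H v) /\ (forall e, gE G e -> gE H e) /\
  (forall v a, gsig G v a -> gsig H v a) /\ (forall e a, gdel G e a -> gdel H e a).

Definition union2 (G H : graph) : graph :=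
  Graph (fun v => gV G v \/ gV H v) (fun e => gE G e \/ gE H e)
        (fun v a => gsig G v a \/ gsig H v a) (fun e a => gdel G e a \/ gdel H e a).

Definition bigunion (I : V -> Prop) (g : V -> graph) : graph :=
  Graph (fun v => exists i, I i /\ gV (g i) v)
        (fun e => exists i, I i /\ gE (g i) e)
        (fun v a => exists i, I i /\ gsig (g i) v a)
        (fun e a => exists i, I i /\ gdel (g i) e a).

Definition renaming (R : V -> V) : Prop :=
  (forall x y, R x = R y -> x = y) /\ (forall y, exists x, R x = y).

Definition rename (R : V -> V) (G : graph) : graph :=
  Graph (fun w => exists v, gV G v /\ R v = w)
        (fun e' => gE G (fun x : port => e' (R (fst x), snd x)))
        (fun w a => exists v, R v = w /\ gsig G v a)
        (fun e' a => gdel G (fun x : port => e' (R (fst x), snd x)) a).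

Definition adj (G : graph) (u v : V) : Prop :=
  exists (p q : P) e, gE G e /\ e (u, p) /\ e (v, q) /\ (u, p) <> (v, q).

Fixpoint within (G : graph) (c : V) (n : nat) (v : V) : Prop :=
  match n with
  | 0 => gV G c /\ v = c
  | S k => within G c k v \/ exists u, within G c k u /\ adj G u v
  end.

Definition disk_edge (G : graph) (r : nat) (c : V) (e : port -> Prop) : Prop :=
  gE G e /\ exists u p, e (u, p) /\ within G c r u.

Definition disk (G : graph) (r : nat) (c : V) : graph :=
  Graph (fun v => within G c (S r) v)
        (disk_edge G r c)
        (fun v a => gsig G v a /\ within G c r v)
        (fun e a => gdel G e a /\ disk_edge G r c e).

Definition is_disk (r : nat) (H : graph) (c : V) : Prop :=
  exists G, is_graph G /\ gV G c /\ H = disk G r c.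

Definition is_local_rule (f : graph -> V -> graph) (r : nat) : Prop :=
  (forall H c, is_disk r H c -> is_graph (f H c)) /\
  (forall R, renaming R -> exists R', renaming R' /\
     forall H c, is_disk r H c -> f (rename R H) (R c) = rename R' (f H c)) /\
  (forall H1 c1 H2 c2, is_disk r H1 c1 -> is_disk r H2 c2 ->
     (forall v, ~ (gV H1 v /\ gV H2 v)) ->
     forall v, ~ (gV (f H1 c1) v /\ gV (f H2 c2) v)) /\
  (exists b : nat, forall H c, is_disk r H c ->
     exists l : list V, length l <= b /\ forall v, gV (f H c) v -> In v l) /\
  (forall G u v, is_graph G -> gV G u -> gV G v ->
     is_graph (union2 (f (disk G r u) u) (f (disk G r v) v))).

Definition monotonic_rule (f : graph -> V -> graph) (r : nat) : Prop :=
  forall H1 H2 c, is_disk r H1 c -> is_disk r H2 c -> gincl H1 H2 ->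
    gincl (f H1 c) (f H2 c).

Definition CGD (f : graph -> V -> graph) (r : nat) (G : graph) : graph :=
  bigunion (gV G) (fun v => f (disk G r v) v).

Definition Conj (F : graph -> graph) (R R' : V -> V) : Prop :=
  renaming R' /\ forall G, is_graph G -> F (rename R G) = rename R' (F G).

Definition gmorph (m : V -> V) (G H : graph) : Prop :=
  renaming m /\ gincl (rename m G) H.

(* objects of D^r : (H,{c}) encoded (H, Some c), (empty, {}) encoded (empty, None) *)
Definition D_obj (r : nat) (H : graph) (C : option V) : Prop :=
  match C with
  | Some c => is_disk r H c
  | None => H = empty_graph
  end.

Definition D_morph (n : V -> V) (H1 : graph) (C1 : option V)
  (H2 : graph) (C2 : option V) : Prop :=
  gmorph n H1 H2 /\
  match C1 with
  | Some c1 => exists c2, C2 = Some c2 /\ n c1 = c2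
  | None => True
  end.

Definition ftilde (f : graph -> V -> graph) (H : graph) (C : option V) : graph :=
  match C with
  | Some c => f H c
  | None => empty_graph
  end.

Definition comma_obj (r : nat) (G H : graph) (C : option V) (m : V -> V) : Prop :=
  D_obj r H C /\ gmorph m H G.

Definition comma_morph (H1 : graph) (C1 : option V) (m1 : V -> V)
  (H2 : graph) (C2 : option V) (m2 : V -> V) (n : V -> V) : Prop :=
  D_morph n H1 C1 H2 C2 /\ m1 = (fun x => m2 (n x)).

(* a cocone over \widetilde f o Proj with vertex X, given by a family lam of
   underlying renamings indexed by objects of the comma category; the
   morphism \widetilde f (n) has underlying renaming Fbar n *)
Definition is_cocone (r : nat) (f : graph -> V -> graph) (Fbar : (V -> V) -> (V -> V))
  (G X : graph) (lam : graph -> option V -> (V -> V) -> (V -> V)) : Prop :=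
  (forall H C m, comma_obj r G H C m -> gmorph (lam H C m) (ftilde f H C) X) /\
  (forall H1 C1 m1 H2 C2 m2 n,
     comma_obj r G H1 C1 m1 -> comma_obj r G H2 C2 m2 ->
     comma_morph H1 C1 m1 H2 C2 m2 n ->
     lam H1 C1 m1 = (fun x => lam H2 C2 m2 (Fbar n x))).

Definition is_universal_cocone (r : nat) (f : graph -> V -> graph)
  (Fbar : (V -> V) -> (V -> V)) (G L : graph)
  (theta : graph -> option V -> (V -> V) -> (V -> V)) : Prop :=
  is_cocone r f Fbar G L theta /\
  forall X lam, is_graph X -> is_cocone r f Fbar G X lam ->
    exists u, gmorph u L X /\
      (forall H C m, comma_obj r G H C m -> (fun x => u (theta H C m x)) = lam H C m) /\
      (forall u', gmorph u' L X ->
         (forall H C m, comma_obj r G H C m -> (fun x => u' (theta H C m x)) = lam H C m) ->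
         u' = u).

End CGD.

(* Main.v *)
Require Import Defs.
From Stdlib Require Import List Arith FinFun.
From Stdlib Require Import FunctionalExtensionality PropExtensionality ClassicalEpsilon.

Lemma graph_ext {V Sig Del P : Type} (G H : graph V Sig Del P) :
  (forall v, gV G v <-> gV H v) -> (forall e, gE G e <-> gE H e) ->
  (forall v a, gsig G v a <-> gsig H v a) -> (forall e a, gdel G e a <-> gdel H e a) -> G = H.
Proof.
  destruct G as [a b c d], H as [a' b' c' d']; simpl; intros H1 H2 H3 H4.
  f_equal; repeat (apply functional_extensionality; intro); apply propositional_extensionality; auto.
Qed.

Lemma pair_eta_fun {V P : Type} (e : (V * P) -> Prop) :
  (fun x : V * P => e (fst x, snd x)) = e.
Proof. apply functional_extensionality; intros [a b]; reflexivity. Qed.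

Lemma rename_id {V Sig Del P : Type} (G : graph V Sig Del P) : rename (fun x => x) G = G.
Proof.
  apply graph_ext; simpl.
  - intro v; split; [intros [w [H1 H2]]; subst; auto | intro; exists v; auto].
  - intro e; rewrite pair_eta_fun; tauto.
  - intros v a; split; [intros [w [H1 H2]]; subst; auto | intro; exists v; auto].
  - intros e a; rewrite pair_eta_fun; tauto.
Qed.

Lemma rename_comp {V Sig Del P : Type} (m n : V -> V) (G : graph V Sig Del P) :
  rename (fun x => m (n x)) G = rename m (rename n G).
Proof.
  apply graph_ext; simpl.
  - intro v; split.
    + intros [w [H1 H2]]; exists (n w); split; auto; exists w; auto.
    + intros [w [[u [H1 H2]] H3]]; subst; exists u; auto.
  - tauto.
  - intros v a; split.
    + intros [w [H1 H2]]; exists (n w); split; auto; exists w; auto.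
    + intros [w [H3 [u [H1 H2]]]]; subst; exists u; auto.
  - tauto.
Qed.

Lemma renaming_id {V : Type} : renaming (fun x : V => x).
Proof. split; auto. intro y; exists y; auto. Qed.

Lemma renaming_comp {V : Type} (m n : V -> V) : renaming m -> renaming n -> renaming (fun x => m (n x)).
Proof.
  intros [Hm1 Hm2] [Hn1 Hn2]; split; auto.
  intro y; destruct (Hm2 y) as [z Hz]; destruct (Hn2 z) as [x Hx]; exists x; congruence.
Qed.

Definition rinv {V : Type} {R : V -> V} (HR : renaming R) (y : V) : V :=
  proj1_sig (constructive_indefinite_description _ (proj2 HR y)).

Lemma rinv_r {V : Type} {R : V -> V} (HR : renaming R) y : R (rinv HR y) = y.
Proof. unfold rinv; destruct constructive_indefinite_description; auto. Qed.

Lemma rinv_l {V : Type} {R : V -> V} (HR : renaming R) x : rinv HR (R x) = x.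
Proof. apply (proj1 HR); apply rinv_r. Qed.

Lemma is_graph_rename {V Sig Del P : Type} (R : V -> V) (G : graph V Sig Del P) :
  renaming R -> is_graph G -> is_graph (rename R G).
Proof.
  intros HR [Hc [He [Hd [Hs1 [Hs2 [Hd1 Hd2]]]]]].
  pose proof (rinv_r HR) as Rr. pose proof (rinv_l HR) as Rl.
  pose proof (proj1 HR) as Rinj.
  unfold is_graph; simpl; repeat split.
  - destruct Hc as [g Hg]; exists (fun w => g (rinv HR w)).
    intros x y [vx [Hx1 Hx2]] [vy [Hy1 Hy2]] E; subst.
    rewrite !Rl in E. f_equal; auto.
  - intros e' He'. destruct (He _ He') as [a [b [Hab [Ha [Hb Hx]]]]].
    exists (R (fst a), snd a), (R (fst b), snd b); simpl. repeat split.
    + intro E; inversion E as [[E1 E2]]. apply Hab. apply Rinj in E1.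
      destruct a, b; simpl in *; congruence.
    + exists (fst a); auto.
    + exists (fst b); auto.
    + intro Hy. destruct x as [x1 x2].
      assert (Hy' : e' (R (rinv HR x1), x2)) by (rewrite Rr; auto).
      apply (Hx (rinv HR x1, x2)) in Hy'.
      destruct Hy' as [E|E]; [left|right]; rewrite <- E; simpl; rewrite Rr; auto.
    + intros [E|E]; subst.
      * assert (Ha' : (fst a, snd a) = a \/ (fst a, snd a) = b) by (destruct a; auto).
        apply Hx in Ha'. exact Ha'.
      * assert (Hb' : (fst b, snd b) = a \/ (fst b, snd b) = b) by (destruct b; auto).
        apply Hx in Hb'. exact Hb'.
  - intros e1 e2 H1 H2 Hne x [Hx1 Hx2].
    apply (Hd _ _ H1 H2) with (x := (rinv HR (fst x), snd x)).
    + intro E; apply Hne. apply functional_extensionality; intros [y1 y2].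
      apply propositional_extensionality.
      pose proof (f_equal (fun h => h (rinv HR y1, y2)) E) as E'. simpl in E'.
      rewrite Rr in E'. rewrite E'; tauto.
    + simpl; rewrite Rr; destruct x; simpl; auto.
  - intros v a [w [E Hw]]; exists w; split; eauto.
  - intros v a b [w [E Hw]] [w' [E' Hw']]; subst. apply Rinj in E'; subst; eauto.
  - intros e a H; eauto.
  - intros e a b H1 H2; eauto.
Qed.
Lemma adj_rename {V Sig Del P : Type} (R : V -> V) (HR : renaming R) (G : graph V Sig Del P) u v :
  adj (rename R G) (R u) (R v) <-> adj G u v.
Proof.
  pose proof (rinv_l HR) as Rl. pose proof (proj1 HR) as Rinj.
  split.
  - intros [p [q [e [He [H1 [H2 Hne]]]]]]; simpl in He.
    exists p, q, (fun x => e (R (fst x), snd x)); simpl; repeat split; auto.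
    intro E; inversion E; subst; auto.
  - intros [p [q [e [He [H1 [H2 Hne]]]]]].
    exists p, q, (fun x => e (rinv HR (fst x), snd x)); simpl; repeat split.
    + match goal with |- gE G ?g => replace g with e; auto end.
      apply functional_extensionality; intros [a b]; simpl; rewrite Rl; auto.
    + rewrite Rl; auto.
    + rewrite Rl; auto.
    + intro E; inversion E as [[E1 E2]]; apply Rinj in E1; subst; auto.
Qed.

Lemma within_rename {V Sig Del P : Type} (R : V -> V) (HR : renaming R) (G : graph V Sig Del P) c k w :
  within (rename R G) (R c) k w <-> exists v, within G c k v /\ R v = w.
Proof.
  pose proof (rinv_r HR) as Rr. pose proof (proj1 HR) as Rinj.
  revert w; induction k as [|k IH]; intro w; simpl.
  - split.
    + intros [[v [H1 H2]] E]; apply Rinj in H2; subst; exists c; auto.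
    + intros [v [[H1 E] E']]; subst; split; auto; exists c; auto.
  - split.
    + intros [H|[u [Hu Ha]]].
      * apply IH in H; destruct H as [v [H E]]; exists v; auto.
      * apply IH in Hu; destruct Hu as [u0 [Hu0 E]]; subst.
        rewrite <- (Rr w) in Ha. apply adj_rename in Ha; auto.
        exists (rinv HR w); split; auto. right; exists u0; auto.
    + intros [v [[H|[u [Hu Ha]]] E]]; subst.
      * left; apply IH; eauto.
      * right; exists (R u); split. apply IH; eauto. apply adj_rename; auto.
Qed.

Lemma disk_edge_rename {V Sig Del P : Type} (R : V -> V) (HR : renaming R) (G : graph V Sig Del P) r c e :
  disk_edge (rename R G) r (R c) e <-> disk_edge G r c (fun x => e (R (fst x), snd x)).
Proof.
  unfold disk_edge; simpl. split.
  - intros [H [u [p [H1 H2]]]]. apply within_rename in H2; auto.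
    destruct H2 as [v [H2 E]]; subst. split; auto. exists v, p; auto.
  - intros [H [u [p [H1 H2]]]]. split; auto. exists (R u), p; split; auto.
    apply within_rename; eauto.
Qed.

Lemma disk_rename {V Sig Del P : Type} (R : V -> V) (HR : renaming R) (G : graph V Sig Del P) r c :
  disk (rename R G) r (R c) = rename R (disk G r c).
Proof.
  apply graph_ext; simpl.
  - intro v. rewrite (within_rename R HR G c (S r) v); simpl; tauto.
  - intro e. apply disk_edge_rename; auto.
  - intros v a; rewrite (within_rename R HR G c r v). split.
    + intros [[w [E H]] [w' [H' E']]]; subst. apply (proj1 HR) in E'; subst. exists w; auto.
    + intros [w [E [H1 H2]]]; subst. split; eauto.
  - intros e a. rewrite (disk_edge_rename R HR G r c e). tauto.
Qed.
Lemma CGD_rename {V Sig Del P : Type} (f : graph V Sig Del P -> V -> graph V Sig Del P) r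
  (R R' : V -> V) (HR : renaming R)
  (Hcov : forall H c, is_disk r H c -> f (rename R H) (R c) = rename R' (f H c))
  (G : graph V Sig Del P) : is_graph G ->
  CGD f r (rename R G) = rename R' (CGD f r G).
Proof.
  intro HG.
  assert (K : forall v, gV G v -> f (disk (rename R G) r (R v)) (R v) = rename R' (f (disk G r v) v)).
  { intros v Hv. rewrite disk_rename by auto. apply Hcov. exists G; auto. }
  unfold CGD; apply graph_ext; simpl.
  - intro w; split.
    + intros [i [[v [Hv E]] Hw]]; subst. rewrite K in Hw by auto. simpl in Hw.
      destruct Hw as [x [Hx E]]; exists x; split; eauto.
    + intros [x [[i [Hi Hx]] E]]; exists (R i); split; eauto.
      rewrite K by auto; simpl; eauto.
  - intro e; split.
    + intros [i [[v [Hv E]] He]]; subst. rewrite K in He by auto. simpl in He. eauto.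
    + intros [i [Hi He]]; exists (R i); split; eauto. rewrite K by auto; simpl; auto.
  - intros w a; split.
    + intros [i [[v [Hv E]] Hw]]; subst. rewrite K in Hw by auto. simpl in Hw.
      destruct Hw as [x [E Hx]]; exists x; split; eauto.
    + intros [x [E [i [Hi Hx]]]]; exists (R i); split; eauto.
      rewrite K by auto; simpl; eauto.
  - intros e a; split.
    + intros [i [[v [Hv E]] He]]; subst. rewrite K in He by auto. simpl in He. eauto.
    + intros [i [Hi He]]; exists (R i); split; eauto. rewrite K by auto; simpl; auto.
Qed.
Lemma within_mono {V Sig Del P : Type} (G : graph V Sig Del P) c k k' v :
  k <= k' -> within G c k v -> within G c k' v.
Proof. induction 1; simpl; auto. Qed.

Lemma within_gV {V Sig Del P : Type} (G : graph V Sig Del P) c k v :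
  is_graph G -> within G c k v -> gV G v.
Proof.
  intros HG; revert v; induction k as [|k IH]; intro v; simpl.
  - intros [H E]; subst; auto.
  - intros [H|[u [Hu [p [q [e [He [H1 [H2 Hne]]]]]]]]]; auto.
    destruct HG as [_ [HE _]]. destruct (HE e He) as [a [b [_ [Ha [Hb Hx]]]]].
    apply Hx in H2; destruct H2; subst; auto.
Qed.

Lemma disk_sub {V Sig Del P : Type} (G : graph V Sig Del P) r c :
  is_graph G -> gincl (disk G r c) G.
Proof.
  intro HG; unfold gincl; repeat split.
  - intros v H; eapply within_gV; [exact HG| exact H].
  - intros e [H _]; auto.
  - intros v a [H _]; auto.
  - intros e a [H _]; auto.
Qed.

Lemma disk_in_disk {V Sig Del P : Type} (G G1 : graph V Sig Del P) r c :
  gincl (disk G1 r c) G -> gincl (disk G1 r c) (disk G r c).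
Proof.
  intros [HV [HE [HS HD]]].
  assert (Cl : forall k v, k <= S r -> within G1 c k v -> within G c k v).
  { induction k as [|k IH]; intros v Hk; simpl.
    - intros [H E]; subst; split; auto. apply HV. apply within_mono with 0; [auto with arith| simpl; auto].
    - intros [H|[u [Hu [p [q [e [He [H1 [H2 Hne]]]]]]]]].
      + left; apply IH; auto with arith.
      + right; exists u; split. apply IH; auto with arith.
        exists p, q, e; repeat split; auto. apply HE. split; auto.
        exists u, p; split; auto. apply within_mono with k; auto with arith. }
  unfold gincl; split; [|split; [|split]].
  - intros v H; apply (Cl (S r)); auto.
  - intros e He; split. apply HE; auto.
    destruct He as [_ [u [p [H1 H2]]]]; exists u, p; split; auto.
  - intros v a [H1 H2]; split. apply HS; split; auto. apply Cl; auto.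
  - intros e a [H1 H2]; split. apply HD; split; auto.
    split. apply HE; auto.
    destruct H2 as [_ [u [p [H3 H4]]]]; exists u, p; split; auto.
Qed.
Lemma gincl_trans {V Sig Del P : Type} (A B C : graph V Sig Del P) :
  gincl A B -> gincl B C -> gincl A C.
Proof. intros [a1 [a2 [a3 a4]]] [b1 [b2 [b3 b4]]]; split; [|split; [|split]]; auto. Qed.

Lemma gincl_bigunion {V Sig Del P : Type} (I : V -> Prop) (g : V -> graph V Sig Del P) i :
  I i -> gincl (g i) (bigunion I g).
Proof. intro Hi; split; [|split; [|split]]; simpl; eauto. Qed.

Lemma rename_bigunion_incl {V Sig Del P : Type} (u : V -> V) (I : V -> Prop)
  (g : V -> graph V Sig Del P) X :
  (forall i, I i -> gincl (rename u (g i)) X) -> gincl (rename u (bigunion I g)) X.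
Proof.
  intro H; split; [|split; [|split]]; simpl.
  - intros w [v [[i [Hi Hv]] E]]. apply (H i Hi). simpl; eauto.
  - intros e [i [Hi He]]. apply (H i Hi). simpl; eauto.
  - intros w a [v [E [i [Hi Hv]]]]. apply (H i Hi). simpl; eauto.
  - intros e a [i [Hi He]]. apply (H i Hi). simpl; eauto.
Qed.

Lemma gincl_rename_empty {V Sig Del P : Type} (u : V -> V) (X : graph V Sig Del P) :
  gincl (rename u (empty_graph V Sig Del P)) X.
Proof.
  split; [|split; [|split]]; simpl.
  - intros w [v [[] _]].
  - intros e [].
  - intros w a [v [_ []]].
  - intros e a [].
Qed.

Lemma renaming_rinv {V : Type} (R : V -> V) (HR : renaming R) : renaming (rinv HR).
Proof.
  split.
  - intros x y E. rewrite <- (rinv_r HR x), <- (rinv_r HR y), E; auto.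
  - intro y; exists (R y); apply rinv_l.
Qed.

Theorem proposition4p22 (V Sig Del P : Type)
  (V_uncountable : ~ exists g : V -> nat, Injective g)
  (P_finite : Finite P)
  (f : graph V Sig Del P -> V -> graph V Sig Del P) (r : nat)
  (Hloc : is_local_rule f r) (Hmono : monotonic_rule f r)
  (Fbar : (V -> V) -> (V -> V))
  (HConj : forall R, renaming R ->
     forall R', Conj (CGD f r) R R' <-> R' = Fbar R)
  (G : graph V Sig Del P) (HG : is_graph G) :
  is_universal_cocone r f Fbar G (CGD f r G)
    (fun (H : graph V Sig Del P) (C : option V) (m : V -> V) => Fbar m).
Proof.
  destruct Hloc as [Hlg [Hcov [Hdisj [Hbnd Hcons]]]].
  assert (ConjF : forall R (HR : renaming R), Conj (CGD f r) R (Fbar R)).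
  { intros R HR; apply (HConj R HR); reflexivity. }
  assert (Fren : forall R, renaming R -> renaming (Fbar R)).
  { intros R HR; apply (ConjF R HR). }
  assert (Fcov : forall R, renaming R -> forall H c, is_disk r H c ->
            f (rename R H) (R c) = rename (Fbar R) (f H c)).
  { intros R HR. destruct (Hcov R HR) as [R' [HR' HcovR]].
    assert (E : R' = Fbar R).
    { apply (HConj R HR). split; auto. intros G0 HG0. apply CGD_rename; auto. }
    subst; auto. }
  assert (Fid : Fbar (fun x => x) = (fun x => x)).
  { symmetry; apply (HConj _ renaming_id). split. apply renaming_id.
    intros G0 _; rewrite !rename_id; auto. }
  assert (Fcomp : forall m n, renaming m -> renaming n ->
            Fbar (fun x => m (n x)) = (fun x => Fbar m (Fbar n x))).
  { intros m n Hm Hn. symmetry; apply (HConj _ (renaming_comp _ _ Hm Hn)). split.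
    - apply renaming_comp; auto.
    - intros G0 HG0. rewrite rename_comp, (proj2 (ConjF m Hm)) by (apply is_graph_rename; auto).
      rewrite (proj2 (ConjF n Hn)) by auto. rewrite <- rename_comp; auto. }
  assert (Cocone : is_cocone r f Fbar G (CGD f r G)
            (fun (H : graph V Sig Del P) (C : option V) (m : V -> V) => Fbar m)).
  { split.
    - intros H C m [HD [Hm Hincl]]. split; [apply Fren; auto|].
      destruct C as [c|]; simpl in *.
      + rewrite <- Fcov by auto.
        destruct HD as [G1 [HG1 [Hc E]]]; subst H.
        rewrite <- disk_rename in * by auto.
        set (G2 := rename m G1) in *.
        assert (HG2 : is_graph G2) by (apply is_graph_rename; auto).
        assert (Hc2 : gV G2 (m c)) by (exists c; auto).
        assert (HmcG : gV G (m c)).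
        { apply (proj1 Hincl). apply within_mono with 0; [auto with arith|]. simpl; auto. }
        apply gincl_trans with (f (disk G r (m c)) (m c)).
        * apply Hmono. exists G2; auto. exists G; auto. apply disk_in_disk; auto.
        * unfold CGD. apply gincl_bigunion with (g := fun v => f (disk G r v) v); auto.
      + apply gincl_rename_empty.
    - intros H1 C1 m1 H2 C2 m2 n [_ [Hm1 _]] [_ [Hm2 _]] [[[Hn _] _] E].
      subst m1. apply Fcomp; auto. }
  split; auto.
  intros X lam HX [Hl1 Hl2].
  set (u := lam (empty_graph V Sig Del P) None (fun x => x)).
  assert (Eobj : forall m, renaming m ->
            comma_obj r G (empty_graph V Sig Del P) None m).
  { intros m Hm. split. reflexivity. split; auto. apply gincl_rename_empty. }
  assert (Key : forall H C m, comma_obj r G H C m -> lam H C m = (fun x => u (Fbar m x))).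
  { intros H C m HO. pose proof (proj1 (proj2 HO)) as Hm.
    assert (E1 : lam (empty_graph V Sig Del P) None m = lam H C m).
    { rewrite (Hl2 _ _ _ H C m (fun x => x) (Eobj m Hm) HO).
      - rewrite Fid; reflexivity.
      - split; [|reflexivity]. split; [|destruct C; auto].
        split. apply renaming_id. apply gincl_rename_empty. }
    rewrite <- E1.
    assert (E2 : u = fun x => lam (empty_graph V Sig Del P) None m (Fbar (rinv Hm) x)).
    { apply (Hl2 _ _ _ _ _ _ (rinv Hm) (Eobj _ renaming_id) (Eobj m Hm)).
      split.
      - split; auto. split. apply renaming_rinv. apply gincl_rename_empty.
      - apply functional_extensionality; intro x; rewrite rinv_r; auto. }
    rewrite E2. apply functional_extensionality; intro x.
    change (Fbar (rinv Hm) (Fbar m x)) with ((fun y => Fbar (rinv Hm) (Fbar m y)) x).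
    rewrite <- Fcomp by (auto; apply renaming_rinv).
    assert (E3 : (fun y => rinv Hm (m y)) = (fun y => y)).
    { apply functional_extensionality; intro; apply rinv_l. }
    rewrite E3, Fid; auto. }
  exists u. split; [|split].
  - split.
    + exact (proj1 (Hl1 _ _ _ (Eobj _ renaming_id))).
    + unfold CGD. apply rename_bigunion_incl. intros i Hi.
      assert (HO : comma_obj r G (disk G r i) (Some i) (fun x => x)).
      { split. exists G; auto. split. apply renaming_id. rewrite rename_id. apply disk_sub; auto. }
      pose proof (proj2 (Hl1 _ _ _ HO)) as Hin. rewrite (Key _ _ _ HO), Fid in Hin. exact Hin.
  - intros H C m HO. symmetry; apply Key; auto.
  - intros u' _ Hu'. pose proof (Hu' _ _ _ (Eobj _ renaming_id)) as E.
    rewrite Fid in E. exact E.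
Qed.
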